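(* Let $g_1,g_2$ be monic divisors of $x^m-1$ over $\mathbb{F}_{q^2}$ and $v\in\mathcal{R}$ with $\gcd(v^2-1,x^m-1)=1$, and let $\mathcal{D}_3$ be the QC code of length $2m$ over $\mathbb{F}_{q^2}$ generated by $(g_1,vg_1)$ and $(vg_2,g_2)$. Then $\mathcal{D}_3$ is Hermitian dual-containing iff $g_1\mid g_1^{\perp_H}(1+v\overline{v}^{[q]})$, $g_1\mid g_2^{\perp_H}(\overline{v}^{[q]}+v)$ and $g_2\mid g_2^{\perp_H}(1+v\overline{v}^{[q]})$.
   Context: $q$ a prime power; $\mathcal{R}=\mathbb{F}_{q^2}[x]/(x^m-1)$, elements identified with representatives of degree $<m$; $[k]=(k_0,\dots,k_{m-1})$; $\overline{k}(x)=k(x^{-1})\bmod(x^m-1)$; $k^{[q]}=\sum k_i^qx^i$; $f^*(x)=x^{\deg f}f(1/x)$; for $k\in\mathcal{R}$, $f=\frac{x^m-1}{\gcd(k,x^m-1)}$, $k^{\perp}=f(0)^{-1}f^*$, $k^{\perp_H}=(k^{[q]})^{\perp}$. ''$g\mid a$'' for $g\mid x^m-1$ means $g$ divides the representative of $a$. The QC code generated by $(u_{i1},u_{i2})$, $i=1,2$, is $\{([r_1u_{11}+r_2u_{21}],[r_1u_{12}+r_2u_{22}]):r_i\in\mathcal{R}\}$. Hermitian inner product $\sum u_i^qv_i$; dual-containing means $\mathcal{D}_3^{\perp_H}\subseteq\mathcal{D}_3$. *)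

(* Defs.v *)
From HB Require Import structures.
From mathcomp Require Import all_boot all_order all_algebra.
Set Implicit Arguments. Unset Strict Implicit. Unset Printing Implicit Defensive.
Import GRing.Theory.
Local Open Scope ring_scope.

(* R = F[x]/(x^m - 1), elements represented by polynomials
   of degree < m (i.e. size <= m). *)

Definition prime_power (q : nat) : Prop :=
  exists p k : nat, prime p /\ (0 < k)%N /\ q = (p ^ k)%N.

Section QC.
Variable F : fieldType.

Definition xm1 (m : nat) : {poly F} := 'X^m - 1.

Definition red (m : nat) (p : {poly F}) : {poly F} := p %% xm1 m.

(* kbar(x) = k(x^{-1}) mod (x^m - 1) *)
Definition barp (m : nat) (k : {poly F}) : {poly F} :=
  \poly_(i < m) (red m k)`_((m - i) %% m).

Definition frobp (q : nat) (k : {poly F}) : {poly F} :=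
  map_poly (fun a : F => a ^+ q) k.

Definition recip (f : {poly F}) : {poly F} :=
  \poly_(i < size f) f`_((size f).-1 - i).

Definition perp (m : nat) (k : {poly F}) : {poly F} :=
  let f := xm1 m %/ gcdp k (xm1 m) in (f`_0)^-1 *: recip f.

Definition perpH (q m : nat) (k : {poly F}) : {poly F} := perp m (frobp q k).

Definition cvec (m : nat) (k : {poly F}) : 'rV[F]_m := \row_(i < m) k`_i.

Definition inQC (m : nat) (u11 u12 u21 u22 : {poly F}) (w : 'rV[F]_(m + m)) : Prop :=
  exists r1 r2 : {poly F},
    w = row_mx (cvec m (red m (r1 * u11 + r2 * u21)))
               (cvec m (red m (r1 * u12 + r2 * u22))).

Definition hip (q n : nat) (u v : 'rV[F]_n) : F :=
  \sum_(i < n) (u 0 i) ^+ q * v 0 i.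

Definition herm_dual_containing (q n : nat) (C : 'rV[F]_n -> Prop) : Prop :=
  forall w : 'rV[F]_n, (forall c, C c -> hip q w c = 0) -> C w.

End QC.

Arguments xm1 {F} m.
Arguments red {F} m p.
Arguments barp {F} m k.
Arguments frobp {F} q k.
Arguments recip {F} f.
Arguments perp {F} m k.
Arguments perpH {F} q m k.
Arguments cvec {F} m k.
Arguments inQC {F} m u11 u12 u21 u22 w.
Arguments hip {F} q n u v.
Arguments herm_dual_containing {F} q n C.

(* Main.v *)
Require Import Defs.
From HB Require Import structures.
From mathcomp Require Import all_boot all_order all_algebra all_field.
From mathcomp Require Import ring zify.
Import GRing.Theory.
Local Open Scope ring_scope.

Section Main.
Variables (F : finFieldType) (q m : nat).
Hypotheses (Hq0 : (0 < q)%N) (frobD : forall a b : F, (a + b) ^+ q = a ^+ q + b ^+ q)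
  (frobK : forall a : F, (a ^+ q) ^+ q = a) (Hm : (0 < m)%N).

Definition frobF (a : F) : F := a ^+ q.

Lemma frobF_zmod : zmod_morphism frobF.
Proof.
move=> a b; rewrite /frobF.
have H0 : (0 : F) ^+ q = 0 by rewrite expr0n; case: q Hq0.
have HN : forall c : F, (- c) ^+ q = - c ^+ q.
  by move=> c; apply/eqP; rewrite -subr_eq0 opprK -frobD addNr H0.
by rewrite frobD HN.
Qed.
HB.instance Definition _ := GRing.isZmodMorphism.Build F F frobF frobF_zmod.
Lemma frobF_mul : monoid_morphism frobF.
Proof. by split; rewrite /frobF ?expr1n // => a b; rewrite exprMn. Qed.
HB.instance Definition _ := GRing.isMonoidMorphism.Build F F frobF frobF_mul.

Notation N := (xm1 m : {poly F}).
Notation z p := (N %| p).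

Lemma N_neq0 : N != 0.
Proof. by rewrite -size_poly_gt0 /xm1 size_Xn_sub_1. Qed.
Lemma size_N : size N = m.+1.
Proof. by rewrite /xm1 size_Xn_sub_1. Qed.

Definition eqm (a b : {poly F}) := N %| a - b.

Lemma eqm_refl a : eqm a a. Proof. by rewrite /eqm subrr dvdp0. Qed.
Lemma eqm_sym a b : eqm a b -> eqm b a.
Proof. by rewrite /eqm -dvdpNr opprB. Qed.
Lemma eqm_trans a b c : eqm a b -> eqm b c -> eqm a c.
Proof. by rewrite /eqm => H1 H2; rewrite -(subrK b a) -addrA dvdp_add. Qed.
Lemma eqmD a b c d : eqm a b -> eqm c d -> eqm (a + c) (b + d).
Proof. by rewrite /eqm => H1 H2; rewrite opprD addrACA dvdp_add. Qed.
Lemma eqmN a b : eqm a b -> eqm (- a) (- b).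
Proof. by rewrite /eqm -opprD dvdpNr. Qed.
Lemma eqmB a b c d : eqm a b -> eqm c d -> eqm (a - c) (b - d).
Proof. by move=> H1 H2; apply: eqmD => //; apply: eqmN. Qed.
Lemma eqmM a b c d : eqm a b -> eqm c d -> eqm (a * c) (b * d).
Proof.
rewrite /eqm => H1 H2.
have -> : a * c - b * d = a * (c - d) + (a - b) * d by ring.
by apply: dvdp_add; [apply: dvdp_mull | apply: dvdp_mulr].
Qed.
Lemma eqm_mod a : eqm (a %% N) a.
Proof.
rewrite /eqm {2}(divp_eq a N).
have -> : a %% N - (a %/ N * N + a %% N) = - (a %/ N) * N by ring.
exact: dvdp_mull.
Qed.
Lemma eqm_modE a b : eqm a b -> a %% N = b %% N.
Proof.
rewrite /eqm => H; rewrite -(subrK b a) modpD (modp_eq0 H) add0r.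
by [].
Qed.
Lemma modE_eqm a b : a %% N = b %% N -> eqm a b.
Proof.
move=> H; apply: (@eqm_trans _ (a %% N)); first exact: eqm_sym (eqm_mod a).
by rewrite H; apply: eqm_mod.
Qed.
Lemma z_eqm a b : eqm a b -> z a = z b.
Proof.
rewrite /eqm => H; apply/idP/idP => Ha.
  by rewrite -(subrK a b) dvdp_add // -dvdpNr opprB.
by rewrite -(subrK b a) dvdp_add.
Qed.
Lemma z_eqm0 a : z a = eqm a 0.
Proof. by rewrite /eqm subr0. Qed.

Lemma dvdN_Xkm j : z ('X^(m * j) - 1).
Proof.
rewrite exprM -(expr1n _ j) subrXX.
exact: dvdp_mulr.
Qed.

Lemma eqm_Xmod k : eqm 'X^k 'X^(k %% m).
Proof.
rewrite /eqm {1}(divn_eq k m) exprD.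
have -> : 'X^(k %/ m * m) * 'X^(k %% m) - 'X^(k %% m) =
   'X^(k %% m) * ('X^(m * (k %/ m)) - 1 : {poly F}) by rewrite mulnC; ring.
exact/dvdp_mull/dvdN_Xkm.
Qed.

Lemma Xmod k : 'X^k %% N = 'X^(k %% m).
Proof.
rewrite (eqm_modE _ _ (eqm_Xmod k)) modp_small // size_N size_polyXn ltnS.
by rewrite ltn_pmod.
Qed.

Lemma eqmZ c a b : eqm a b -> eqm (c *: a) (c *: b).
Proof. by move=> H; rewrite -!mul_polyC; apply: eqmM => //; apply: eqm_refl. Qed.
Lemma eqmX a b i : eqm a b -> eqm (a ^+ i) (b ^+ i).
Proof.
move=> H; elim: i => [|i IH]; first by rewrite !expr0 eqm_refl.
by rewrite !exprS; apply: eqmM.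
Qed.
Lemma eqm_sum (I : Type) (r : seq I) (P : pred I) (f g : I -> {poly F}) :
  (forall i, P i -> eqm (f i) (g i)) -> eqm (\sum_(i <- r | P i) f i) (\sum_(i <- r | P i) g i).
Proof.
move=> H; apply: (big_ind2 (fun x y => eqm x y)) => //; first exact: eqm_refl.
by move=> *; apply: eqmD.
Qed.
Lemma eqm_comp p Y Y' : eqm Y Y' -> eqm (p \Po Y) (p \Po Y').
Proof.
move=> H; rewrite !comp_polyE; apply: eqm_sum => i _.
by apply: eqmZ; apply: eqmX.
Qed.

Lemma eqm_Xk k l : (k %% m = l %% m)%N -> eqm 'X^k 'X^l.
Proof.
move=> H; apply: (@eqm_trans _ 'X^(k %% m)); first exact: eqm_Xmod.
by rewrite H; apply: eqm_sym; apply: eqm_Xmod.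
Qed.

Definition tau (p : {poly F}) : {poly F} := map_poly frobF (p \Po 'X^(m.-1)).

Lemma tauD a b : tau (a + b) = tau a + tau b.
Proof. by rewrite /tau comp_polyD rmorphD. Qed.
Lemma tauB a b : tau (a - b) = tau a - tau b.
Proof. by rewrite /tau comp_polyB rmorphB. Qed.
Lemma tauM a b : tau (a * b) = tau a * tau b.
Proof. by rewrite /tau comp_polyM rmorphM. Qed.
Lemma tau1 : tau 1 = 1.
Proof. by rewrite /tau comp_polyC rmorph1. Qed.
Lemma tau0 : tau 0 = 0.
Proof. by rewrite /tau comp_polyC rmorph0. Qed.
Lemma tauXn k : tau 'X^k = 'X^(k * m.-1).
Proof. by rewrite /tau comp_Xn_poly -exprM mulnC map_polyXn. Qed.
Lemma tauN : z (tau N).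
Proof.
have := dvdN_Xkm m.-1.
by rewrite [in X in _ -> X]/xm1 tauB tau1 tauXn mulnC.
Qed.
Lemma tau_eqm a b : eqm a b -> eqm (tau a) (tau b).
Proof.
rewrite /eqm -tauB => /dvdpP [k ->]; rewrite tauM.
exact: dvdp_mull tauN.
Qed.
Lemma tau_tau a : eqm (tau (tau a)) a.
Proof.
rewrite /tau map_comp_poly map_polyXn -map_poly_comp.
rewrite map_poly_id; last by move=> x _; rewrite /= /frobF frobK.
rewrite -comp_polyA comp_Xn_poly -exprM.
rewrite -{2}(comp_polyXr a); apply: eqm_comp.
rewrite -[X in eqm _ X]expr1; apply: eqm_Xk.
case: m Hm => // n _ /=; case: n => [//|n].
have -> : (n.+1 * n.+1 = n * n.+2 + 1)%N by ring.
by rewrite modnMDl.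
Qed.
Lemma z_tau a : z (tau a) = z a.
Proof.
rewrite !z_eqm0; apply/idP/idP => H.
  apply: (eqm_trans _ _ _ (eqm_sym _ _ (tau_tau a))); rewrite -tau0.
  by move/tau_eqm: H; rewrite tau0.
by rewrite -tau0; apply: tau_eqm.
Qed.

Lemma arithA k j : (j < m)%N -> ((k + j) %% m == 0)%N = (j == (m - k %% m) %% m)%N.
Proof.
move=> Hj; rewrite -modnDml.
have Hr : (k %% m < m)%N by rewrite ltn_pmod.
move: Hr; set r := (k %% m)%N => Hr.
case: (posnP r) => [->|r0].
  by rewrite add0n subn0 modnn !modn_small.
rewrite [((m - r) %% m)%N]modn_small; last by lia.
case: (ltnP (r + j) m) => H.
  rewrite modn_small //; apply/idP/idP => /eqP E; apply/eqP; lia.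
have -> : (r + j = (r + j - m) + m)%N by lia.
rewrite modnDr modn_small; last by lia.
apply/idP/idP => /eqP E; apply/eqP; lia.
Qed.

Lemma arithB i : (i < m)%N -> ((m - (i * m.-1) %% m) %% m = i)%N.
Proof.
move=> Hi; case: i Hi => [|i] Hi.
  by rewrite mul0n mod0n subn0 modnn.
have E : (i.+1 * m.-1 = i * m + (m - i.+1))%N.
  move: Hi; case: m Hm => // n _ /= Hi; rewrite mulSn mulnS subSS; lia.
rewrite E modnMDl (@modn_small (m - i.+1)%N m); last by lia.
have E2 : (m - (m - i.+1) = i.+1)%N by lia.
by rewrite E2 modn_small.
Qed.

Lemma arithC j : (j < m)%N -> ((m - (m - j) %% m) %% m = j)%N.
Proof.
move=> Hj; case: j Hj => [|j] Hj.
  by rewrite subn0 modnn subn0 modnn.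
rewrite (modn_small (m := (m - j.+1)%N)); last by lia.
have -> : (m - (m - j.+1) = j.+1)%N by lia.
by rewrite modn_small.
Qed.

Definition eps (p : {poly F}) : F := (p %% N)`_0.

Lemma eps_eqm a b : eqm a b -> eps a = eps b.
Proof. by move=> H; rewrite /eps (eqm_modE _ _ H). Qed.
Lemma epsD a b : eps (a + b) = eps a + eps b.
Proof. by rewrite /eps modpD coefD. Qed.
Lemma eps0 : eps 0 = 0.
Proof. by rewrite /eps mod0p coef0. Qed.
Lemma epsZ c a : eps (c *: a) = c * eps a.
Proof. by rewrite /eps modpZl coefZ. Qed.
Lemma eps_sum (I : Type) (r : seq I) (P : pred I) (f : I -> {poly F}) :
  eps (\sum_(i <- r | P i) f i) = \sum_(i <- r | P i) eps (f i).
Proof. exact: (big_morph eps epsD eps0). Qed.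
Lemma eps_z p : z p -> eps p = 0.
Proof. by move=> H; rewrite /eps (modp_eq0 H) coef0. Qed.
Lemma eps_Xn k : eps 'X^k = ((k %% m)%N == 0%N)%:R.
Proof. by rewrite /eps Xmod coefXn eq_sym. Qed.

Lemma poly_small (p : {poly F}) : (size p <= m)%N -> p = \sum_(j < m) p`_j *: 'X^j.
Proof.
move=> Hs; rewrite -(poly_def m (fun j => p`_j)); apply/polyP => i; rewrite coef_poly.
case: ltnP => // Hi; move/leq_sizeP: Hs; apply; exact: Hi.
Qed.

Lemma eps_shift k (p : {poly F}) : (size p <= m)%N -> eps ('X^k * p) = p`_((m - k %% m) %% m).
Proof.
move=> Hs; rewrite {1}(poly_small _ Hs) mulr_sumr eps_sum.
have Hj0 : ((m - k %% m) %% m < m)%N by rewrite ltn_pmod.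
rewrite (bigD1 (Ordinal Hj0)) //= big1 ?addr0.
  by rewrite -scalerAr -exprD epsZ eps_Xn arithA //= eqxx mulr1.
move=> j Hj; rewrite -scalerAr -exprD epsZ eps_Xn arithA //.
have -> : (nat_of_ord j == (m - k %% m) %% m)%N = false.
  by apply/negbTE; move: Hj; apply: contra => /eqP E; apply/eqP/val_inj.
by rewrite mulr0.
Qed.

Lemma tauC c : tau c%:P = (c ^+ q)%:P.
Proof. by rewrite /tau comp_polyC map_polyC. Qed.
Lemma tauZ c a : tau (c *: a) = (c ^+ q) *: tau a.
Proof. by rewrite -!mul_polyC tauM tauC. Qed.
Lemma tau_sum (I : Type) (r : seq I) (P : pred I) (f : I -> {poly F}) :
  tau (\sum_(i <- r | P i) f i) = \sum_(i <- r | P i) tau (f i).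
Proof. exact: (big_morph tau tauD tau0). Qed.

Lemma herm (a b : {poly F}) : (size a <= m)%N -> (size b <= m)%N ->
  \sum_(i < m) a`_i ^+ q * b`_i = eps (tau a * b).
Proof.
move=> Ha Hb; rewrite {2}(poly_small _ Ha) tau_sum mulr_suml eps_sum.
apply: eq_bigr => i _; rewrite tauZ tauXn -scalerAl epsZ eps_shift //.
by rewrite arithB.
Qed.

Lemma z_of_eps (p : {poly F}) : (forall k, eps ('X^k * p) = 0) -> z p.
Proof.
move=> H; apply/modp_eq0P.
have Hs : (size (p %% N)%R <= m)%N by rewrite -ltnS -size_N ltn_modp N_neq0.
apply/polyP => j; rewrite coef0.
case: (ltnP j m) => Hj; last by move/leq_sizeP: Hs; apply.
have := H (m - j)%N.
rewrite -(eps_eqm _ _ (eqmM _ _ _ _ (eqm_refl 'X^(m - j)) (eqm_mod p))).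
by rewrite eps_shift // arithC.
Qed.

Definition W (a1 a2 : {poly F}) : 'rV[F]_(m + m) :=
  row_mx (cvec m (red m a1)) (cvec m (red m a2)).

Lemma size_red a : (size (red m a : {poly F}) <= m)%N.
Proof. by rewrite -ltnS -size_N ltn_modp N_neq0. Qed.

Lemma cvec_inj a b : cvec m (red m a) = cvec m (red m b) -> eqm a b.
Proof.
move=> H; apply: modE_eqm; apply/polyP => i.
case: (ltnP i m) => Hi.
  by have := congr1 (fun r : 'rV[F]_m => r 0 (Ordinal Hi)) H; rewrite /cvec !mxE.
have E1 := size_red a; have E2 := size_red b.
move/leq_sizeP: E1 => E1; move/leq_sizeP: E2 => E2.
by have := E1 i Hi; have := E2 i Hi; rewrite /red => -> ->.
Qed.

Lemma hipW a1 a2 b1 b2 :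
  hip q (m + m) (W a1 a2) (W b1 b2) = eps (tau a1 * b1) + eps (tau a2 * b2).
Proof.
rewrite /hip big_split_ord /=.
under eq_bigr do rewrite /W !row_mxEl /cvec !mxE.
under [X in _ + X]eq_bigr do rewrite /W !row_mxEr /cvec !mxE.
rewrite !herm ?size_red //.
congr (_ + _); apply: eps_eqm; apply: eqmM;
  by [apply: tau_eqm; apply: eqm_mod | apply: eqm_mod].
Qed.

Lemma dualW g1 g2 v a1 a2 :
  (forall c, inQC m g1 (v * g1) (v * g2) g2 c -> hip q (m + m) (W a1 a2) c = 0) <->
  z (g1 * (tau a1 + v * tau a2)) /\ z (g2 * (v * tau a1 + tau a2)).
Proof.
have key : forall r1 r2, hip q (m + m) (W a1 a2)
     (W (r1 * g1 + r2 * (v * g2)) (r1 * (v * g1) + r2 * g2)) =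
   eps (r1 * (g1 * (tau a1 + v * tau a2)) + r2 * (g2 * (v * tau a1 + tau a2))).
  move=> r1 r2; rewrite hipW -epsD; congr eps; ring.
split.
  move=> H; split; apply: z_of_eps => k.
    by have := H _ (ex_intro _ 'X^k (ex_intro _ 0 erefl)); rewrite key mul0r addr0.
  by have := H _ (ex_intro _ 0 (ex_intro _ 'X^k erefl)); rewrite key mul0r add0r.
move=> [H1 H2] c [r1 [r2 ->]].
have -> : row_mx (cvec m (red m (r1 * g1 + r2 * (v * g2))))
     (cvec m (red m (r1 * (v * g1) + r2 * g2))) =
   W (r1 * g1 + r2 * (v * g2)) (r1 * (v * g1) + r2 * g2) by [].
by rewrite key eps_z // dvdp_add // dvdp_mull.
Qed.

Lemma memW g1 g2 v s a1 a2 : g1 %| N -> g2 %| N -> eqm (s * (1 - v ^+ 2)) 1 ->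
  inQC m g1 (v * g1) (v * g2) g2 (W a1 a2) <->
  (g1 %| a1 - v * a2) /\ (g2 %| a2 - v * a1).
Proof.
move=> Hg1 Hg2 Hs; split.
  move=> [r1 [r2 /eq_row_mx [/cvec_inj E1 /cvec_inj E2]]].
  have E3 : eqm (a1 - v * a2) (r1 * g1 * (1 - v ^+ 2)).
    apply: (eqm_trans _ _ _ (eqmB _ _ _ _ E1 (eqmM _ _ _ _ (eqm_refl v) E2))).
    rewrite /eqm; have -> : r1 * g1 + r2 * (v * g2) - v * (r1 * (v * g1) + r2 * g2) -
      r1 * g1 * (1 - v ^+ 2) = 0 by ring.
    exact: dvdp0.
  have E4 : eqm (a2 - v * a1) (r2 * g2 * (1 - v ^+ 2)).
    apply: (eqm_trans _ _ _ (eqmB _ _ _ _ E2 (eqmM _ _ _ _ (eqm_refl v) E1))).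
    rewrite /eqm; have -> : r1 * (v * g1) + r2 * g2 - v * (r1 * g1 + r2 * (v * g2)) -
      r2 * g2 * (1 - v ^+ 2) = 0 by ring.
    exact: dvdp0.
  split.
    rewrite -(subrK (r1 * g1 * (1 - v ^+ 2)) (a1 - v * a2)) dvdp_add //.
      exact: dvdp_trans Hg1 E3.
    by rewrite mulrAC dvdp_mull // dvdp_mulIr.
  rewrite -(subrK (r2 * g2 * (1 - v ^+ 2)) (a2 - v * a1)) dvdp_add //.
    exact: dvdp_trans Hg2 E4.
  by rewrite mulrAC dvdp_mull // dvdp_mulIr.
move=> [/dvdpP [k1 E1] /dvdpP [k2 E2]].
exists (s * k1), (s * k2); rewrite /W.
have -> : red m a1 = red m (s * k1 * g1 + s * k2 * (v * g2)).
  apply: eqm_modE; apply: eqm_sym.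
  have -> : s * k1 * g1 + s * k2 * (v * g2) = s * (k1 * g1) + s * v * (k2 * g2) by ring.
  rewrite -E1 -E2.
  have -> : s * (a1 - v * a2) + s * v * (a2 - v * a1) = (s * (1 - v ^+ 2)) * a1 by ring.
  by rewrite -{2}(mul1r a1); apply: eqmM => //; apply: eqm_refl.
have -> : red m a2 = red m (s * k1 * (v * g1) + s * k2 * g2).
  apply: eqm_modE; apply: eqm_sym.
  have -> : s * k1 * (v * g1) + s * k2 * g2 = s * v * (k1 * g1) + s * (k2 * g2) by ring.
  rewrite -E1 -E2.
  have -> : s * v * (a1 - v * a2) + s * (a2 - v * a1) = (s * (1 - v ^+ 2)) * a2 by ring.
  by rewrite -{2}(mul1r a2); apply: eqmM => //; apply: eqm_refl.
by [].
Qed.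

Lemma z_XnM k (Q : {poly F}) : z ('X^k * Q) = z Q.
Proof.
apply: Gauss_dvdpr; apply: coprimep_expr; rewrite coprimepX /root /xm1.
by rewrite !hornerE expr0n gtn_eqF // sub0r oppr_eq0 oner_eq0.
Qed.

Lemma z_ZM (c : F) (P Y : {poly F}) : c != 0 -> z ((c *: P) * Y) = z (P * Y).
Proof. by move=> Hc; rewrite -scalerAl dvdpZr. Qed.

Definition P0 (f : {poly F}) : {poly F} := (f`_0)^-1 *: recip f.

Lemma recipZ (c : F) (f : {poly F}) : c != 0 -> recip (c *: f) = c *: recip f.
Proof.
move=> Hc; rewrite /recip size_scale //; apply/polyP => i.
by rewrite coefZ !coef_poly; case: ifP; rewrite ?coefZ ?mulr0.
Qed.

Lemma P0Z (c : F) (f : {poly F}) : c != 0 -> P0 (c *: f) = P0 f.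
Proof.
move=> Hc; by rewrite /P0 recipZ // coefZ scalerA invfM mulrAC mulVf // mul1r.
Qed.

Lemma recip_eqm (f : {poly F}) : eqm (recip f) ('X^((size f).-1) * (f \Po 'X^(m.-1))).
Proof.
rewrite /recip poly_def comp_polyE mulr_sumr.
rewrite (reindex_inj rev_ord_inj) /=.
apply: eqm_sum => i _.
have Hi : (i < size f)%N by [].
have E : ((size f).-1 - (size f - i.+1) = i)%N by lia.
rewrite E -scalerAr -exprM -exprD; apply: eqmZ; apply: eqm_Xk.
have E2 : ((size f).-1 + m.-1 * i = i * m + (size f - i.+1))%N.
  move: Hi; case: m Hm => // n _ /= Hi; rewrite mulnS (mulnC n i); lia.
by rewrite E2 modnMDl.
Qed.

Lemma perpH_z (g Y : {poly F}) : g %| N ->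
  z (perpH q m g * Y) = z (tau (N %/ g) * Y).
Proof.
move=> Hg.
set h := N %/ g.
have Ngh : N = g * h by rewrite /h divpKC.
have fN : map_poly frobF N = N by rewrite /xm1 rmorphB rmorph1 /= map_polyXn.
set G := map_poly frobF g; set H := map_poly frobF h.
have NGH : N = G * H by rewrite -fN Ngh rmorphM.
have G0 : G != 0.
  apply/eqP => E; move: N_neq0; rewrite NGH E mul0r eqxx //.
have GN : G %| N by rewrite NGH dvdp_mulIl.
have Hgcd := dvdp_gcd_idl GN.
have Hf : N %/ gcdp G N %= H.
  apply: (eqp_trans (eqp_divr N Hgcd)).
  by rewrite [X in X %/ G]NGH mulKp // eqpxx.
have -> : perpH q m g = P0 (N %/ gcdp G N) by [].
case/eqpP: Hf => [[c1 c2] /= /andP [c10 c20] E].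
have -> : N %/ gcdp G N = (c2 / c1) *: H.
  by rewrite mulrC -scalerA -E scalerA mulVf // scale1r.
rewrite P0Z; last by rewrite mulf_neq0 // invr_eq0.
have H00 : H`_0 != 0.
  apply/eqP => E0; have := congr1 (fun p : {poly F} => p`_0) NGH.
  rewrite coef0M E0 mulr0 /xm1 coefB coefXn coef1 eq_sym eqn0Ngt Hm /= sub0r.
  by move/eqP; rewrite oppr_eq0 oner_eq0.
rewrite /P0 z_ZM; last by rewrite invr_eq0.
rewrite (z_eqm _ _ (eqmM _ _ _ _ (recip_eqm H) (eqm_refl Y))) -mulrA z_XnM.
by rewrite /tau map_comp_poly map_polyXn.
Qed.

Lemma dvd_h (g Y : {poly F}) : g %| N -> (g %| Y) = z ((N %/ g) * Y).
Proof.
move=> Hg; set h := N %/ g.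
have E : g * h = N by rewrite divpKC.
have h0 : h != 0 by apply/eqP => E0; move: N_neq0; rewrite -E E0 mulr0 eqxx.
by rewrite -E [g * h]mulrC dvdp_mul2l.
Qed.

Lemma conv (g a1 a2 v u : {poly F}) : g %| N -> eqm u (tau v) ->
  (g %| a1 - v * a2) = z (tau (N %/ g) * (tau a1 - u * tau a2)).
Proof.
move=> Hg Hu; rewrite dvd_h // -z_tau tauM tauB tauM; apply: z_eqm.
apply: eqmM; first exact: eqm_refl.
apply: eqmB; first exact: eqm_refl.
apply: eqmM; [exact: eqm_sym | exact: eqm_refl].
Qed.

Lemma zE (P Q : {poly F}) : eqm P Q -> z Q -> z P.
Proof. by move=> H; rewrite (z_eqm _ _ H). Qed.

Lemma zdiv (g P Q : {poly F}) : g %| P -> z (g * Q) -> z (P * Q).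
Proof. by move=> /dvdpP [k ->] H; rewrite -mulrA dvdp_mull. Qed.

Lemma zfin2 (X T e : {poly F}) : eqm e 1 -> X * e = T -> z T -> z X.
Proof.
move=> He E HT; apply: (zE _ (X * e)); last by rewrite E.
by rewrite -{1}(mulr1 X); apply: eqmM; [exact: eqm_refl | exact: eqm_sym].
Qed.

Lemma zfin (X Y Y' c e : {poly F}) : eqm e 1 -> eqm Y Y' -> Y' * c = X * e -> z Y -> z X.
Proof.
move=> He HY E HYz; apply: (zfin2 _ _ _ He (esym E)).
by rewrite -(z_eqm _ _ (eqmM _ _ _ _ HY (eqm_refl c))) dvdp_mulr.
Qed.

Lemma core (g1 g2 v u s : {poly F}) :
  g1 %| N -> g2 %| N -> eqm u (tau v) -> eqm (s * (1 - v ^+ 2)) 1 ->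
  (forall a1 a2, z (g1 * (tau a1 + v * tau a2)) -> z (g2 * (v * tau a1 + tau a2)) ->
     (g1 %| a1 - v * a2) /\ (g2 %| a2 - v * a1))
  <->
  [/\ z (tau (N %/ g1) * ((N %/ g1) * (1 + v * u))),
      z (tau (N %/ g2) * ((N %/ g1) * (u + v)))
    & z (tau (N %/ g2) * ((N %/ g2) * (1 + v * u)))].
Proof.
move=> Hg1 Hg2 Hu Hs.
set h1 := N %/ g1; set h2 := N %/ g2.
have Eg1 : g1 * h1 = N by rewrite /h1 divpKC.
have Eg2 : g2 * h2 = N by rewrite /h2 divpKC.
have Htv : eqm (tau u) v.
  exact: eqm_trans _ _ _ (tau_eqm _ _ Hu) (tau_tau v).
split.
- move=> H.
  have [I1 I2] : (g1 %| tau (s * h1) - v * tau (- (s * v * h1))) /\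
                 (g2 %| tau (- (s * v * h1)) - v * tau (s * h1)).
    apply: H.
      apply: (zE _ (g1 * (s * h1 * (1 - v ^+ 2)))).
        apply: eqmM; first exact: eqm_refl.
        have -> : s * h1 * (1 - v ^+ 2) = s * h1 + v * - (s * v * h1) by ring.
        by apply: eqmD; [exact: tau_tau | apply: eqmM; [exact: eqm_refl | exact: tau_tau]].
      have -> : g1 * (s * h1 * (1 - v ^+ 2)) = (s * (1 - v ^+ 2)) * (g1 * h1) by ring.
    by rewrite Eg1 dvdp_mull.
    apply: (zE _ (0)); last exact: dvdp0.
    have -> : (0 : {poly F}) = g2 * (v * (s * h1) + - (s * v * h1)) by ring.
    apply: eqmM; first exact: eqm_refl.
    by apply: eqmD; [apply: eqmM; [exact: eqm_refl | exact: tau_tau] | exact: tau_tau].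
  have [J1 J2] : (g1 %| tau (- (s * v * h2)) - v * tau (s * h2)) /\
                 (g2 %| tau (s * h2) - v * tau (- (s * v * h2))).
    apply: H.
      apply: (zE _ (0)); last exact: dvdp0.
      have -> : (0 : {poly F}) = g1 * (- (s * v * h2) + v * (s * h2)) by ring.
      apply: eqmM; first exact: eqm_refl.
      by apply: eqmD; [exact: tau_tau | apply: eqmM; [exact: eqm_refl | exact: tau_tau]].
    apply: (zE _ (g2 * (s * h2 * (1 - v ^+ 2)))).
      apply: eqmM; first exact: eqm_refl.
      have -> : s * h2 * (1 - v ^+ 2) = v * - (s * v * h2) + s * h2 by ring.
      by apply: eqmD; [apply: eqmM; [exact: eqm_refl | exact: tau_tau] | exact: tau_tau].
    have -> : g2 * (s * h2 * (1 - v ^+ 2)) = (s * (1 - v ^+ 2)) * (g2 * h2) by ring.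
    by rewrite Eg2 dvdp_mull.
  rewrite (conv _ _ _ _ _ Hg1 Hu) in I1.
  rewrite (conv _ _ _ _ _ Hg2 Hu) in I2.
  rewrite (conv _ _ _ _ _ Hg2 Hu) in J2.
  have Y1 : eqm (tau (tau (s * h1))) (s * h1) by exact: tau_tau.
  have Y2 : eqm (tau (tau (- (s * v * h1)))) (- (s * v * h1)) by exact: tau_tau.
  have Y3 : eqm (tau (tau (s * h2))) (s * h2) by exact: tau_tau.
  have Y4 : eqm (tau (tau (- (s * v * h2)))) (- (s * v * h2)) by exact: tau_tau.
  split.
  + apply: (zfin _ _ (tau h1 * (s * h1 - u * - (s * v * h1))) (1 - v ^+ 2) _ Hs _ _ I1).
      by apply: eqmM; [exact: eqm_refl | apply: eqmB => //; apply: eqmM => //; exact: eqm_refl].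
    ring.
  + apply: (zfin _ _ (tau h2 * (- (s * v * h1) - u * (s * h1))) (- (1 - v ^+ 2)) _ Hs _ _ I2).
      by apply: eqmM; [exact: eqm_refl | apply: eqmB => //; apply: eqmM => //; exact: eqm_refl].
    ring.
  + apply: (zfin _ _ (tau h2 * (s * h2 - u * - (s * v * h2))) (1 - v ^+ 2) _ Hs _ _ J2).
      by apply: eqmM; [exact: eqm_refl | apply: eqmB => //; apply: eqmM => //; exact: eqm_refl].
    ring.
- move=> [R1 R2 R3] a1 a2 Z1 Z2.
  set A := tau a1; set B := tau a2.
  have Huv : eqm (tau u + tau v) (u + v).
    by rewrite [tau u + _]addrC; apply: eqmD; [exact: eqm_sym | exact: Htv].
  have F1 : g1 %| tau h1 * (1 + v * u) by rewrite dvd_h // mulrCA.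
  have F3 : g2 %| tau h2 * (1 + v * u) by rewrite dvd_h // mulrCA.
  have F4 : g1 %| tau h2 * (u + v) by rewrite dvd_h // mulrCA.
  have F2 : g2 %| tau h1 * (u + v).
    rewrite dvd_h // -z_tau !tauM tauD.
    apply: (zE _ (tau h2 * (h1 * (u + v)))) => //.
    apply: eqmM; first exact: eqm_refl.
    by apply: eqmM; [exact: tau_tau | exact: Huv].
  split.
  + rewrite (conv _ _ _ _ _ Hg1 Hu) -/A -/B.
    apply: (zfin2 _ (s * ((tau h1 * (1 + v * u)) * (A + v * B) - (tau h1 * (u + v)) * (v * A + B))) _ Hs).
      ring.
    by apply: dvdp_mull; apply: dvdp_sub; apply: zdiv; eauto.
  + rewrite (conv _ _ _ _ _ Hg2 Hu) -/A -/B.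
    apply: (zfin2 _ (s * ((tau h2 * (1 + v * u)) * (v * A + B) - (tau h2 * (u + v)) * (A + v * B))) _ Hs).
      ring.
    by apply: dvdp_mull; apply: dvdp_sub; apply: zdiv; eauto.
Qed.

Lemma arithD j : (j < m)%N -> ((j * m.-1) %% m = (m - j) %% m)%N.
Proof.
move=> Hj; case: j Hj => [|j] Hj.
  by rewrite mul0n mod0n subn0 modnn.
have E : (j.+1 * m.-1 = j * m + (m - j.+1))%N.
  move: Hj; case: m Hm => // n _ /= Hi; rewrite mulSn mulnS subSS; lia.
by rewrite E modnMDl.
Qed.

Lemma eqm_compl (p p' : {poly F}) : eqm p p' -> eqm (p \Po 'X^(m.-1)) (p' \Po 'X^(m.-1)).
Proof.
rewrite /eqm -comp_polyB => /dvdpP [k ->]; rewrite comp_polyM.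
apply: dvdp_mull.
have := dvdN_Xkm m.-1.
by rewrite [in X in _ -> X]/xm1 comp_polyB comp_Xn_poly comp_polyC -exprM mulnC.
Qed.

Definition einv (i : 'I_m) : 'I_m := Ordinal (ltn_pmod (m - i) Hm).
Lemma einvK : involutive einv.
Proof. by move=> i; apply/val_inj; rewrite /= arithC. Qed.

Lemma barp_eqm (v : {poly F}) : eqm (barp m v) (v \Po 'X^(m.-1)).
Proof.
apply: (eqm_trans _ (red m v \Po 'X^(m.-1))); last exact: eqm_compl (eqm_mod v).
rewrite /barp poly_def {2}(poly_small _ (size_red v)) linear_sum /=.
rewrite (reindex_inj (can_inj einvK)) /=.
apply: eqm_sum => i _.
rewrite arithC // linearZ /= comp_Xn_poly -exprM; apply: eqmZ; apply: eqm_Xk.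
by rewrite modn_mod mulnC arithD.
Qed.

Lemma frob_eqm a b : eqm a b -> eqm (map_poly frobF a) (map_poly frobF b).
Proof.
rewrite /eqm -rmorphB => /dvdpP [k ->]; rewrite rmorphM.
apply: dvdp_mull.
by rewrite /xm1 rmorphB rmorph1 /= map_polyXn.
Qed.

Lemma main_sec (g1 g2 v : {poly F}) :
  g1 %| N -> g2 %| N -> coprimep (v ^+ 2 - 1) N ->
  herm_dual_containing q (m + m) (inQC m g1 (v * g1) (v * g2) g2)
  <->
  [/\ g1 %| red m (perpH q m g1 * (1 + v * frobp q (barp m v))),
      g1 %| red m (perpH q m g2 * (frobp q (barp m v) + v))
    & g2 %| red m (perpH q m g2 * (1 + v * frobp q (barp m v)))].
Proof.
move=> Hg1 Hg2 /Bezout_eq1_coprimepP [[s1 s2] /= Es].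
set u := frobp q (barp m v).
have Hu : eqm u (tau v) by apply: frob_eqm; apply: barp_eqm.
have Hs : eqm (- s1 * (1 - v ^+ 2)) 1.
  rewrite /eqm; have -> : - s1 * (1 - v ^+ 2) - 1 =
      - s2 * N + (s1 * (v ^+ 2 - 1) + s2 * N - 1) by ring.
  by rewrite Es subrr addr0 dvdp_mull.
have Hcore := core _ _ _ _ _ Hg1 Hg2 Hu Hs.
have -> : [/\ g1 %| red m (perpH q m g1 * (1 + v * u)),
      g1 %| red m (perpH q m g2 * (u + v))
    & g2 %| red m (perpH q m g2 * (1 + v * u))] <->
  [/\ z (tau (N %/ g1) * ((N %/ g1) * (1 + v * u))),
      z (tau (N %/ g2) * ((N %/ g1) * (u + v)))
    & z (tau (N %/ g2) * ((N %/ g2) * (1 + v * u)))].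
  rewrite /red -(dvdp_mod _ Hg1) -(dvdp_mod _ Hg1) -(dvdp_mod _ Hg2).
  rewrite (dvd_h _ (perpH q m g1 * _) Hg1) (dvd_h _ (perpH q m g2 * _) Hg1).
  rewrite (dvd_h _ (perpH q m g2 * _) Hg2).
  rewrite ![(_ %/ _) * (perpH _ _ _ * _)]mulrCA.
  rewrite (perpH_z g1 _ Hg1) (perpH_z g2 _ Hg2) (perpH_z g2 _ Hg2).
  by [].
rewrite -Hcore; split.
- move=> HD a1 a2 Z1 Z2; apply/(memW _ _ _ _ _ _ Hg1 Hg2 Hs).
  by apply: HD; apply/dualW.
- move=> H w Hw.
  have Ew : w = W (rVpoly (lsubmx w)) (rVpoly (rsubmx w)).
    rewrite /W /red !modp_small ?size_N ?ltnS ?size_poly //.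
    by rewrite /cvec -[\row_i _]/(poly_rV _) -[\row_i (rVpoly _)`_i]/(poly_rV _) !rVpolyK hsubmxK.
  rewrite Ew in Hw *; apply/(memW _ _ _ _ _ _ Hg1 Hg2 Hs).
  by move/dualW: Hw => [Z1 Z2]; apply: H.
Qed.
End Main.

Lemma frob_facts (q : nat) (Hq : prime_power q) (F : finFieldType) (HF : #|F| = (q ^ 2)%N) :
  [/\ (0 < q)%N, forall a b : F, (a + b) ^+ q = a ^+ q + b ^+ q
    & forall a : F, (a ^+ q) ^+ q = a].
Proof.
case: Hq => p [k [pp [k0 Eq]]]; subst q.
have Hc : p \in [pchar F].
  have HF2 : #|F| = (p ^ (k * 2))%N by rewrite HF expnM.
  exact: (card_finPcharP HF2 pp).
split.
- by rewrite expn_gt0 prime_gt0.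
- move=> a b; apply: exprDn_pchar.
  rewrite (eq_pnat _ (pcharf_eq Hc)) pnatX pnat_id //.
- move=> a; by rewrite -exprM mulnn -HF expf_card.
Qed.

Theorem mainTheorem12 (q : nat) (Hq : prime_power q)
  (F : finFieldType) (HF : #|F| = (q ^ 2)%N)
  (m : nat) (Hm : (0 < m)%N)
  (g1 g2 v : {poly F})
  (Hg1m : g1 \is monic) (Hg1d : g1 %| xm1 m)
  (Hg2m : g2 \is monic) (Hg2d : g2 %| xm1 m)
  (Hv : (size v <= m)%N)
  (Hcop : coprimep (v ^+ 2 - 1) (xm1 m)) :
  herm_dual_containing q (m + m) (inQC m g1 (v * g1) (v * g2) g2)
  <->
  [/\ g1 %| red m (perpH q m g1 * (1 + v * frobp q (barp m v))),
      g1 %| red m (perpH q m g2 * (frobp q (barp m v) + v))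
    & g2 %| red m (perpH q m g2 * (1 + v * frobp q (barp m v)))].
Proof.
have [Hq0 HD HK] := frob_facts _ Hq _ HF.
exact: (@main_sec F q m Hq0 HD HK Hm g1 g2 v Hg1d Hg2d Hcop).
Qed.
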